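(* For any pair of rooted trees $T_1,T_2$ on leaf set $[n]$, the cone $K_{T_1}+K_{T_2}$, considered in $\mathbb{R}^{\binom{[n]}{2}}/\mathbb{R}(1,\dots,1)^T$, is a simplicial cone generated by $\{-v_C\}_{C\in\mathrm{clade}^\circ(T_1)\cup\mathrm{clade}^\circ(T_2)}$; that is, $K_{T_1}+K_{T_2}=\mathbb{R}(1,\dots,1)^T+\mathrm{cone}\{-v_C: C\in\mathrm{clade}^\circ(T_1)\cup\mathrm{clade}^\circ(T_2)\}$, and the images of these generators in the quotient $\mathbb{R}^{\binom{[n]}{2}}/\mathbb{R}(1,\dots,1)^T$ are linearly independent.
   Context: A rooted tree on leaf set $[n]$ has leaves labeled bijectively by $[n]$ and internal vertices each with at least two children. A clade of $T$ is the set of leaves below an internal vertex; $\mathrm{clade}(T)$ is the set of clades and $\mathrm{clade}^\circ(T)=\mathrm{clade}(T)\setminus\{[n]\}$. For $C\subseteq[n]$, $v_C\in\mathbb{R}^{\binom{[n]}{2}}$ is the characteristic vector of $\binom{C}{2}$. An ultrametric is $\delta\in\mathbb{R}^{\binom{[n]}{2}}$ with $\delta_{uv}\le\max\{\delta_{uw},\delta_{vw}\}$ for all distinct $u,v,w$. $K_T$ is the set of $\delta$ such that there are real weights on the internal vertices of $T$, weakly increasing along every path toward the root, with $\delta_{uv}$ equal to the weight of the most recent common ancestor of $u$ and $v$; $K_{T_1}+K_{T_2}$ is the Minkowski sum. *)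

(* Defs.v *)
From HB Require Import structures.
From mathcomp Require Import all_boot all_order all_algebra.
Set Implicit Arguments. Unset Strict Implicit. Unset Printing Implicit Defensive.
Import Order.TTheory GRing.Theory Num.Theory.
Local Open Scope ring_scope.

Definition pair2 (n : nat) := {p : {set 'I_n} | #|p| == 2%N}.

(* A rooted tree on leaf set [n] (leaves labelled bijectively by [n], every
   internal vertex has >= 2 children) is encoded by its set of clades
   clade(T) : the leaf sets below internal vertices.  Such families are exactly
   the hierarchies: laminar families of subsets of size >= 2 containing [n]
   (when n >= 2; for n <= 1 the tree has no internal vertex). *)
Definition is_rtree (n : nat) (T : {set {set 'I_n}}) : Prop :=
  [/\ forall C, C \in T -> (1 < #|C|)%N,
      forall C D, C \in T -> D \in T ->
        [|| C \subset D, D \subset C | [disjoint C & D]]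
    & (1 < n)%N -> [set: 'I_n] \in T].

Definition clade_o (n : nat) (T : {set {set 'I_n}}) : {set {set 'I_n}} :=
  T :\ [set: 'I_n].

Definition vC (R : pzRingType) (n : nat) (C : {set 'I_n}) : pair2 n -> R :=
  fun p => if val p \subset C then 1 else 0.

(* K_T : weights w on internal vertices (= clades), weakly increasing toward the
   root (C \subset D means D is an ancestor of C), with delta_{uv} the weight of
   the most recent common ancestor, i.e. of the smallest clade containing u,v. *)
Definition K_T (R : realFieldType) (n : nat) (T : {set {set 'I_n}})
  (delta : pair2 n -> R) : Prop :=
  exists w : {set 'I_n} -> R,
    (forall C D, C \in T -> D \in T -> C \subset D -> w C <= w D) /\
    (forall (p : pair2 n) C, C \in T -> val p \subset C ->
       (forall D, D \in T -> val p \subset D -> C \subset D) ->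
       delta p = w C).

Definition K_sum (R : realFieldType) (n : nat) (T1 T2 : {set {set 'I_n}})
  (delta : pair2 n -> R) : Prop :=
  exists d1 d2 : pair2 n -> R,
    K_T T1 d1 /\ K_T T2 d2 /\ forall p, delta p = d1 p + d2 p.

Definition line_plus_cone (R : realFieldType) (n : nat) (G : {set {set 'I_n}})
  (delta : pair2 n -> R) : Prop :=
  exists (t : R) (lam : {set 'I_n} -> R),
    (forall C, C \in G -> 0 <= lam C) /\
    forall p, delta p = t + \sum_(C in G) lam C * (- vC R C p).

Definition lin_indep_mod_ones (R : realFieldType) (n : nat)
  (G : {set {set 'I_n}}) : Prop :=
  forall (c : {set 'I_n} -> R) (t : R),
    (forall p : pair2 n, \sum_(C in G) c C * (- vC R C p) = t) ->
    forall C, C \in G -> c C = 0.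

(* Main.v *)
Require Import Defs.
From HB Require Import structures.
From mathcomp Require Import all_boot all_order all_algebra.
From mathcomp Require Import ring zify.
Set Implicit Arguments. Unset Strict Implicit. Unset Printing Implicit Defensive.
Import Order.TTheory GRing.Theory Num.Theory.
Local Open Scope ring_scope.

Section Indep.
Variables (T : finType) (R : realFieldType).

Definition lam_on (U : {set T}) (L : {set {set T}}) :=
  (forall C, C \in L -> [/\ C \subset U, (1 < #|C|)%N & C != U]) /\
  (forall C D, C \in L -> D \in L -> [|| C \subset D, D \subset C | [disjoint C & D]]).

Lemma same_card_contra U L P Q y : lam_on U L -> P \in L -> Q \in L ->
  #|P| = #|Q| -> P != Q -> y \in P -> y \in Q -> False.
Proof.
case=> _ Hl HP HQ Hc Hne yP yQ.
case/or3P: (Hl _ _ HP HQ) => [sPQ|sQP|dis].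
- by move/eqP: Hne; apply; apply/eqP; rewrite eqEcard sPQ Hc leqnn.
- by move/eqP: Hne; apply; apply/eqP; rewrite eq_sym eqEcard sQP Hc leqnn.
- by move/setP: (disjoint_setI0 dis) => /(_ y); rewrite inE yP yQ inE.
Qed.

Lemma three_contra U L1 L2 X1 X2 X3 y12 y13 y23 :
  lam_on U L1 -> lam_on U L2 ->
  X1 \in L1 :|: L2 -> X2 \in L1 :|: L2 -> X3 \in L1 :|: L2 ->
  #|X1| = #|X2| -> #|X1| = #|X3| ->
  X1 != X2 -> X1 != X3 -> X2 != X3 ->
  y12 \in X1 -> y12 \in X2 -> y13 \in X1 -> y13 \in X3 ->
  y23 \in X2 -> y23 \in X3 -> False.
Proof.
move=> H1 H2 h1 h2 h3 c12 c13 n12 n13 n23 a1 a2 b1 b3 d2 d3.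
have c23 : #|X2| = #|X3| by rewrite -c12.
move: h1 h2 h3; rewrite !in_setU => /orP[h1|h1] /orP[h2|h2] /orP[h3|h3];
first [ exact: (same_card_contra H1 h1 h2 c12 n12 a1 a2)
      | exact: (same_card_contra H2 h1 h2 c12 n12 a1 a2)
      | exact: (same_card_contra H1 h1 h3 c13 n13 b1 b3)
      | exact: (same_card_contra H2 h1 h3 c13 n13 b1 b3)
      | exact: (same_card_contra H1 h2 h3 c23 n23 d2 d3)
      | exact: (same_card_contra H2 h2 h3 c23 n23 d2 d3) ].
Qed.

Definition restrL (U : {set T}) (L : {set {set T}}) x :=
  [set D :\ x | D in [set D in L | (1 < #|D :\ x|)%N && (D :\ x != U :\ x)]].

Lemma restrP U (L : {set {set T}}) x B : B \in restrL U L x ->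
  exists2 D, D \in L & [/\ B = D :\ x, (1 < #|D :\ x|)%N & D :\ x != U :\ x].
Proof.
case/imsetP => D; rewrite inE => /andP[DL /andP[c1 ne]] ->.
by exists D.
Qed.

Lemma restr_mem U (L : {set {set T}}) x D : D \in L -> (1 < #|D :\ x|)%N -> D :\ x != U :\ x ->
  D :\ x \in restrL U L x.
Proof. by move=> DL c1 ne; apply/imsetP; exists D; rewrite // inE DL c1 ne. Qed.

Lemma restr_lam U L x : lam_on U L -> lam_on (U :\ x) (restrL U L x).
Proof.
case=> Hm Hl; split.
- move=> B /restrP[D DL [-> c1 ne]]; split => //.
  by apply: setSD; case: (Hm D DL).
- move=> B1 B2 /restrP[D1 D1L [-> _ _]] /restrP[D2 D2L [-> _ _]].
  case/or3P: (Hl _ _ D1L D2L) => h; apply/or3P.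
  + by apply: Or31; apply: setSD.
  + by apply: Or32; apply: setSD.
  + by apply: Or33; apply: (disjointW _ _ h); apply: subD1set.
Qed.

Lemma setD1_notin (A : {set T}) x : x \notin A -> A :\ x = A.
Proof.
move=> xA; apply/setP => y; rewrite !inE; case: eqP => // ->.
by rewrite (negbTE xA).
Qed.

Lemma indep_gen m : forall (U : {set T}) (L1 L2 : {set {set T}}) (c : {set T} -> R) (K : R), #|U| = m ->
  lam_on U L1 -> lam_on U L2 ->
  (forall p : {set T}, p \subset U -> #|p| = 2%N ->
     \sum_(C in L1 :|: L2 | p \subset C) c C = K) ->
  forall C, C \in L1 :|: L2 -> c C = 0.
Proof.
elim/ltn_ind: m => m IH U L1 L2 c K hU H1 H2 Hs.
set G := L1 :|: L2.
have HG : forall C, C \in G -> [/\ C \subset U, (1 < #|C|)%N & C != U].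
  by move=> C; rewrite in_setU => /orP[h|h]; [case: H1 => + _; apply|case: H2 => + _; apply].
have restr : forall x, x \in U -> forall B,
    B \in restrL U L1 x :|: restrL U L2 x ->
    \sum_(D in G | D :\ x == B) c D = 0.
  move=> x xU.
  pose c' := fun B => \sum_(D in G | D :\ x == B) c D.
  apply: (IH #|U :\ x| _ (U :\ x) _ _ c' (K - c' (U :\ x))) => //.
  - by rewrite -hU (cardsD1 x U) xU.
  - exact: restr_lam.
  - exact: restr_lam.
  move=> p pS p2.
  have := pS; rewrite subsetD1 => /andP[pU xp].
  have eqp : forall D, (p \subset D :\ x) = (p \subset D) by move=> D; rewrite subsetD1 xp andbT.
  have E1 : c' (U :\ x) = \sum_(D | ((D \in G) && (p \subset D)) && (D :\ x == U :\ x)) c D.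
    apply: eq_bigl => D; case: (D \in G) => //=.
    case E: (D :\ x == U :\ x); rewrite ?andbT ?andbF //.
    by rewrite -eqp (eqP E).
  have E2 : \sum_(B in restrL U L1 x :|: restrL U L2 x | p \subset B) c' B =
      \sum_(D | ((D \in G) && (p \subset D)) && ~~ (D :\ x == U :\ x)) c D.
    rewrite [RHS](partition_big (fun D => D :\ x)
      (fun B => (B \in restrL U L1 x :|: restrL U L2 x) && (p \subset B))) /=.
      apply: eq_bigr => B /andP[BG' pB].
      have BS : B != U :\ x.
        by move: BG'; rewrite in_setU => /orP[] /restrP[D _ [-> _ ->]].
      apply: eq_bigl => D.
      case E: (D :\ x == B); rewrite ?andbT ?andbF //.
      by rewrite (eqP E) BS andbT -eqp (eqP E) pB andbT.
    move=> D /andP[/andP[DG pD] ne]; rewrite eqp pD andbT.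
    have c1 : (1 < #|D :\ x|)%N.
      by have := subset_leq_card (_ : p \subset D :\ x); rewrite p2; apply; rewrite eqp.
    by move: DG; rewrite in_setU => /orP[h|h]; rewrite in_setU; apply/orP; [left|right]; apply: restr_mem.
  by rewrite E2 E1 -(Hs p pU p2) [in RHS](bigID (fun D => D :\ x == U :\ x)) /= [X in X - _]addrC addrK.
have key : forall x C, x \in U -> C \in G -> (1 < #|C :\ x|)%N -> C :\ x != U :\ x ->
    (forall D, D \in G -> D != C -> D :\ x = C :\ x -> c D = 0) -> c C = 0.
  move=> x C xU CG c1 ne Hoth.
  have := restr x xU (C :\ x).
  rewrite (bigD1 C) /=; last by rewrite CG eqxx.
  rewrite big1 ?addr0; first apply.
    by move: CG; rewrite in_setU => /orP[h|h]; rewrite in_setU; apply/orP; [left|right]; apply: restr_mem.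
  by move=> D /andP[/andP[DG /eqP DC] DnC]; apply: Hoth.
have big3 : forall C, C \in G -> (2 < #|C|)%N -> c C = 0.
  move=> C CG c3; have /card_gt2P[a [b [d [[aC bC dC] [ab bd da]]]]] := c3.
  have [CU c1 CnU] := HG C CG.
  have cardD : forall z, z \in C -> #|C| = (#|C :\ z|).+1.
    by move=> z zC; rewrite (cardsD1 z C) zC.
  have nin : forall u v, u \in C -> v \in C -> u != v -> C :\ u != C :\ v.
    move=> u v uC vC uv; apply/negP => /eqP E.
    have : v \in C :\ u by rewrite !inE eq_sym uv vC.
    by rewrite E !inE eqxx.
  have [x xC xG] : exists2 x, x \in C & C :\ x \notin G.
    case Ea: (C :\ a \in G); last by exists a; rewrite ?Ea.
    case Eb: (C :\ b \in G); last by exists b; rewrite ?Eb.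
    case Ed: (C :\ d \in G); last by exists d; rewrite ?Ed.
    exfalso; apply: (three_contra (y12 := d) (y13 := b) (y23 := a) H1 H2 Ea Eb Ed).
    all: try (apply: nin; rewrite // eq_sym //).
    - by apply: succn_inj; rewrite -(cardD a aC) -(cardD b bC).
    - by apply: succn_inj; rewrite -(cardD a aC) -(cardD d dC).
    1-6: by rewrite in_setD1 ?aC ?bC ?dC ?andbT // eq_sym.
  have xU : x \in U by apply: (subsetP CU).
  apply: (key x C xU CG).
  - by move: c3; rewrite (cardD x xC).
  - apply/negP => /eqP E; move/eqP: CnU; apply.
    by rewrite -(setD1K xC) E setD1K.
  - move=> D DG DC DxE; exfalso.
    case xD: (x \in D).
      by move/eqP: DC; apply; rewrite -(setD1K xD) DxE setD1K.
    by move: xG; rewrite -DxE setD1_notin ?xD // DG.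
move=> C CG; have [CU c1 CnU] := HG C CG.
case: (ltnP 2 #|C|) => [c3|c2]; first exact: big3.
have C2 : #|C| = 2%N by apply/eqP; rewrite eqn_leq c2 c1.
have UCn0 : U :\: C != set0.
  rewrite setD_eq0; apply/negP => UC; move/eqP: CnU; apply.
  by apply/eqP; rewrite eqEsubset CU UC.
case: (ltnP 1 #|U :\: C|) => [/card_gt1P[x [z [xUC zUC xz]]] | small].
  move: xUC zUC; rewrite !in_setD => /andP[xC xU] /andP[zC zU].
  apply: (key x C xU CG).
  - by rewrite setD1_notin // C2.
  - apply/negP => /eqP E.
    have : z \in U :\ x by rewrite in_setD1 eq_sym xz zU.
    by rewrite -E setD1_notin // (negbTE zC).
  - move=> D DG DC DxE; rewrite [C :\ x](setD1_notin xC) in DxE.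
    have xD : x \in D.
      apply/negPn/negP => xD; move/eqP: DC; apply.
      by rewrite -DxE setD1_notin.
    by apply: big3 => //; rewrite (cardsD1 x D) xD DxE C2.
have [x xUC] := set0Pn _ UCn0.
have UCx : U :\: C = [set x].
  by apply/eqP; rewrite eq_sym eqEcard sub1set xUC cards1 small.
move: xUC; rewrite in_setD => /andP[xC xU].
have cU : #|U| = 3%N.
  by rewrite -(cardsID C U) UCx cards1 (setIidPr CU) C2.
have only : forall q : {set T}, q \subset U -> #|q| = 2%N ->
    \sum_(D in G | q \subset D) c D = if q \in G then c q else 0.
  move=> q qU q2.
  have Hq : forall D, (D \in G) && (q \subset D) = (D \in G) && (D == q).
    move=> D; case DG: (D \in G) => //=.
    have [DU Dc1 DnU] := HG D DG.
    have DltU : (#|D| < 3)%N.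
      by rewrite -cU; apply: proper_card; rewrite properEneq DnU DU.
    apply/idP/eqP => [qD|->]; last by [].
    by apply/eqP; rewrite eq_sym eqEcard qD q2 -ltnS.
  rewrite (eq_bigl _ _ Hq); case qG: (q \in G).
    by rewrite (big_pred1 q) // => D /=; case: eqP => [->|]; rewrite ?qG ?andbF ?andbT.
  by rewrite big_pred0 // => D; case: eqP => [->|]; rewrite ?qG ?andbF.
have /cards2P[a [b [ab CE]]] : #|C| == 2%N by rewrite C2.
have aC : a \in C by rewrite CE !inE eqxx.
have bC : b \in C by rewrite CE !inE eqxx orbT.
have aU : a \in U by apply: (subsetP CU).
have bU : b \in U by apply: (subsetP CU).
have ax : a != x by apply/eqP => E; rewrite -E aC in xC.
have bx : b != x by apply/eqP => E; rewrite -E bC in xC.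
have HK : c C = K by rewrite -(Hs C CU C2) only // CG.
have q1U : [set a; x] \subset U by rewrite subUset !sub1set aU xU.
have q2U : [set b; x] \subset U by rewrite subUset !sub1set bU xU.
have q1c : #|[set a; x]| = 2%N by rewrite cards2 ax.
have q2c : #|[set b; x]| = 2%N by rewrite cards2 bx.
case q1G: ([set a; x] \in G); last by rewrite HK -(Hs _ q1U q1c) only // q1G.
case q2G: ([set b; x] \in G); last by rewrite HK -(Hs _ q2U q2c) only // q2G.
exfalso; apply: (three_contra (y12 := a) (y13 := b) (y23 := x) H1 H2 CG q1G q2G).
- by rewrite C2 q1c.
- by rewrite C2 q2c.
- by apply/eqP => E; move: xC; rewrite E !inE eqxx orbT.
- by apply/eqP => E; move: xC; rewrite E !inE eqxx orbT.
- apply/eqP => E; have : a \in [set a; x] by rewrite !inE eqxx.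
  by rewrite E !inE (negbTE ab) (negbTE ax).
all: by rewrite ?CE !inE eqxx ?orbT.
Qed.

End Indep.

Section Trees.
Variables (R : realFieldType) (n : nat).

Lemma sum_vC (G : {set {set 'I_n}}) (lam : {set 'I_n} -> R) (p : pair2 n) :
  \sum_(C in G) lam C * (- vC R C p) = - \sum_(C in G | val p \subset C) lam C.
Proof.
rewrite big_mkcondr /= -sumrN; apply: eq_bigr => C _; rewrite /vC.
by case: ifP => _; rewrite ?oppr0 ?mulr0 ?mulrN1.
Qed.

Lemma sum_sub (A G : {set {set 'I_n}}) (P : pred {set 'I_n}) (f : {set 'I_n} -> R) :
  A \subset G ->
  \sum_(C in G | P C) (if C \in A then f C else 0) = \sum_(C in A | P C) f C.
Proof.
move=> AG; rewrite big_mkcond [RHS]big_mkcond; apply: eq_bigr => C _.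
case CA: (C \in A); case CG: (C \in G); case: (P C) => //=.
by rewrite (subsetP AG _ CA) in CG.
Qed.

Lemma rt_min (T : {set {set 'I_n}}) (X P E : {set 'I_n}) (y : 'I_n) : is_rtree T -> P \in T -> E \in T ->
  X \subset P -> X \subset E -> y \in X -> (E \subset P -> (#|P| <= #|E|)%N) ->
  P \subset E.
Proof.
case=> _ Hl _ PT ET XP XE yX Hc.
case/or3P: (Hl _ _ PT ET) => // [EP|dis].
  by have /eqP-> : E == P by rewrite eqEcard EP Hc.
move/setP: (disjoint_setI0 dis) => /(_ y).
by rewrite inE (subsetP XP) // (subsetP XE) // inE.
Qed.

Lemma cone_K_T (T : {set {set 'I_n}}) (t : R) (lam : {set 'I_n} -> R) :
  (forall C, C \in clade_o T -> 0 <= lam C) ->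
  K_T T (fun p => t - \sum_(C in clade_o T | val p \subset C) lam C).
Proof.
move=> Hl.
exists (fun C : {set 'I_n} => t - \sum_(D in clade_o T | C \subset D) lam D); split.
  move=> C D CT DT CD; rewrite lerD2l lerN2.
  rewrite [X in _ <= X]big_mkcond [X in X <= _]big_mkcond; apply: ler_sum => E _.
  case ET: (E \in clade_o T) => //=.
  case DE: (D \subset E) => /=; first by rewrite (subset_trans CD DE).
  by case: ifP => _; [exact: Hl|].
move=> p C CT pC Hmin; congr (t - _); apply: eq_bigl => D.
case DT: (D \in clade_o T) => //=.
apply/idP/idP => [pD|CD]; last exact: subset_trans pC CD.
by apply: Hmin => //; move: DT; rewrite in_setD1 => /andP[].
Qed.

Lemma K_T_cone (T : {set {set 'I_n}}) (d : pair2 n -> R) :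
  is_rtree T -> (1 < n)%N -> K_T T d ->
  exists t lam, (forall C, C \in clade_o T -> 0 <= lam C) /\
    forall p, d p = t - \sum_(C in clade_o T | val p \subset C) lam C.
Proof.
move=> HT n1 [w [Hmon Hd]].
have [Hc Hl Hr] := HT.
have rootT := Hr n1.
pose par := fun C : {set 'I_n} => [arg min_(D < [set: 'I_n] | (D \in T) && (C \proper D)) #|D|].
have par_spec : forall C : {set 'I_n}, C \in T -> C != setT ->
    [/\ par C \in T, C \proper par C &
        forall E, E \in T -> C \proper E -> par C \subset E].
  move=> C CT CnT.
  have P0 : (setT \in T) && (C \proper setT) by rewrite rootT properT CnT.
  rewrite /par; case: (@arg_minnP _ setT (fun D : {set 'I_n} => (D \in T) && (C \proper D)) (fun D : {set 'I_n} => #|D|) P0) => P /andP[PT CP] Pmin.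
  split => // E ET CE.
  have /card_gt0P[y yC] : (0 < #|C|)%N by apply: ltnW; apply: Hc.
  apply: (rt_min HT PT ET (proper_sub CP) (proper_sub CE) yC) => _.
  by apply: Pmin; rewrite ET CE.
pose lam' := fun C : {set 'I_n} => w (par C) - w C.
have wT : w setT = w setT - \sum_(D in clade_o T | setT \subset D) lam' D.
  rewrite big_pred0 ?subr0 // => D; rewrite in_setD1 subTset.
  by case: (D == setT); rewrite ?andbF.
have wC : forall k (C : {set 'I_n}), C \in T -> (n - #|C| <= k)%N ->
    w C = w setT - \sum_(D in clade_o T | C \subset D) lam' D.
  elim=> [|k IHk] C CT hk.
    have -> // : C = setT.
    apply/eqP; rewrite eqEcard subsetT cardsT card_ord.
    by move: hk; rewrite leqn0 subn_eq0.
  case: (C =P setT) => [->//|/eqP CnT].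
  have [PT CP Pmin] := par_spec C CT CnT.
  have := IHk (par C) PT.
  have h1 := proper_card CP.
  have h2 : (#|par C| <= n)%N by have := max_card (par C); rewrite card_ord.
  have -> : (n - #|par C| <= k)%N by lia.
  move=> /(_ isT) IH.
  rewrite (bigD1 C) /=; last by rewrite in_setD1 CT CnT subxx.
  have -> : \sum_(i | ((i \in clade_o T) && (C \subset i)) && (i != C)) lam' i =
            \sum_(D in clade_o T | par C \subset D) lam' D.
    apply: eq_bigl => D; case DT': (D \in clade_o T) => //=.
    have DT : D \in T by move: DT'; rewrite in_setD1 => /andP[].
    apply/idP/idP => [/andP[CD DC]|PD].
      by apply: Pmin => //; rewrite properEneq eq_sym DC CD.
    rewrite (subset_trans (proper_sub CP) PD) /=.
    by apply/eqP => E; rewrite E in PD; move: CP; rewrite properE PD andbF.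
  rewrite /lam' IH; ring.
exists (w setT), lam'; split.
  move=> C; rewrite in_setD1 => /andP[CnT CT].
  have [PT CP _] := par_spec C CT CnT.
  by rewrite /lam' subr_ge0; apply: Hmon => //; apply: proper_sub.
move=> p.
have P0 : (setT \in T) && (val p \subset setT) by rewrite rootT subsetT.
case: (@arg_minnP _ setT (fun D : {set 'I_n} => (D \in T) && (val p \subset D)) (fun D : {set 'I_n} => #|D|) P0) => Cm /andP[CmT pCm] Cmmin.
have /card_gt0P[y yp] : (0 < #|val p|)%N by rewrite (eqP (valP p)).
have Hm : forall E, E \in T -> val p \subset E -> Cm \subset E.
  move=> E ET pE; apply: (rt_min HT CmT ET pCm pE yp) => _.
  by apply: Cmmin; rewrite ET pE.
rewrite (Hd p Cm CmT pCm Hm) (wC n Cm CmT (leq_subr _ _)).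
congr (_ - _); apply: eq_bigl => D.
case DT': (D \in clade_o T) => //=.
have DT : D \in T by move: DT'; rewrite in_setD1 => /andP[].
apply/idP/idP => [CD|pD]; first exact: subset_trans pCm CD.
exact: Hm.
Qed.

Lemma tree_lam (T : {set {set 'I_n}}) : is_rtree T -> lam_on [set: 'I_n] (clade_o T).
Proof.
case=> Hc Hl _; split.
  by move=> C; rewrite in_setD1 => /andP[CnT CT]; split; [apply: subsetT|apply: Hc|].
move=> C D; rewrite !in_setD1 => /andP[_ CT] /andP[_ DT]; exact: Hl.
Qed.

End Trees.

Theorem corollary3p9 (R : realFieldType) (n : nat)
  (T1 T2 : {set {set 'I_n}}) :
  is_rtree T1 -> is_rtree T2 ->
  (forall delta : pair2 n -> R,
     K_sum T1 T2 delta <->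
     line_plus_cone (clade_o T1 :|: clade_o T2) delta) /\
  lin_indep_mod_ones R (clade_o T1 :|: clade_o T2).
Proof.
move=> H1 H2; split.
  move=> delta; split.
    case=> d1 [d2 [K1 [K2 Hsum]]].
    case: (ltnP 1 n) => n1; last first.
      exists 0, (fun _ => 0); split => // p; exfalso.
      have := max_card (val p); rewrite card_ord (eqP (valP p)).
      by move=> h; move: (leq_trans h n1).
    have [t1 [l1 [P1 E1]]] := K_T_cone H1 n1 K1.
    have [t2 [l2 [P2 E2]]] := K_T_cone H2 n1 K2.
    exists (t1 + t2), (fun C : {set 'I_n} => (if C \in clade_o T1 then l1 C else 0) +
                                (if C \in clade_o T2 then l2 C else 0)); split.
      by move=> C _; apply: addr_ge0; case: ifP => // h; [exact: P1|exact: P2].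
    move=> p; rewrite sum_vC Hsum E1 E2 big_split /=.
    rewrite !sum_sub ?subsetUl ?subsetUr //; ring.
  case=> t [lam [Hl Hd]].
  exists (fun p : pair2 n => t - \sum_(C in clade_o T1 | val p \subset C) lam C),
         (fun p : pair2 n => 0 - \sum_(C in clade_o T2 | val p \subset C)
                          (if C \in clade_o T1 then 0 else lam C)).
  split; [apply: cone_K_T|split; [apply: cone_K_T|]].
  - by move=> C C1; apply: Hl; rewrite in_setU C1.
  - by move=> C C2; case: ifP => // _; apply: Hl; rewrite in_setU C2 orbT.
  move=> p; rewrite Hd sum_vC.
  rewrite (eq_bigr (fun C : {set 'I_n} => (if C \in clade_o T1 then lam C else 0) +
     (if C \in clade_o T2 then (if C \in clade_o T1 then 0 else lam C) else 0))); last first.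
    move=> C /andP[]; rewrite in_setU.
    by case: (C \in clade_o T1); case: (C \in clade_o T2) => //= _ _; rewrite ?addr0 ?add0r.
  rewrite big_split /= !sum_sub ?subsetUl ?subsetUr //; ring.
move=> c t Hc C CG.
apply: (@indep_gen _ R #|[set: 'I_n]| setT (clade_o T1) (clade_o T2) c (- t)) => //.
- exact: tree_lam.
- exact: tree_lam.
move=> p _ p2.
have pP : #|p| == 2%N by rewrite p2.
by move: (Hc (exist _ p pP)); rewrite sum_vC /= => E; rewrite -E opprK.
Qed.
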